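(* A general ring $I$ is strongly $\pi$-regular if and only if $I$ is quasipolar and $QN(I)\subseteq\mathrm{Nil}(I)$.
   Context: A general ring is an associative ring not necessarily having an identity; $\mathrm{Nil}(I)$ is the set of nilpotent elements of $I$. For $p,q\in I$, $p*q=p+q-pq$; $Q(I)=\{q\in I\mid p*q=0=q*p \text{ for some } p\in I\}$; $\mathrm{comm}(a)=\{x\in I\mid xa=ax\}$, $\mathrm{comm}^2(a)=\{x\in I\mid xy=yx\text{ for all }y\in\mathrm{comm}(a)\}$; $QN(I)=\{q\in I\mid qx\in Q(I)\text{ for every }x\in\mathrm{comm}(q)\}$. An element $a\in I$ is quasipolar in $I$ if there is an idempotent $p=p^2\in\mathrm{comm}^2(a)$ with $a+p\in Q(I)$ and $a-ap\in QN(I)$; $I$ is quasipolar if every element is. An element $a$ is strongly $\pi$-regular if there exist $n\in\mathbb{N}$ and $x\in I$ with $xa=ax$ and $a^n=a^{n+1}x$; $I$ is strongly $\pi$-regular if every element is. *)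

(* Defs.v *)
(* A "general ring" (associative, not necessarily unital) is
   modelled as an additive abelian group (zmodType) with an associative,
   bi-additive multiplication.  MathComp's ring hierarchy always has a 1, so we
   package the non-unital structure ourselves. *)
From HB Require Import structures.
From mathcomp Require Import all_boot all_order all_algebra.
Set Implicit Arguments. Unset Strict Implicit. Unset Printing Implicit Defensive.
Import GRing.Theory.
Local Open Scope ring_scope.

Record genRing := GenRing {
  gr_car :> zmodType;
  gr_mul : gr_car -> gr_car -> gr_car;
  gr_mulA : forall x y z, gr_mul x (gr_mul y z) = gr_mul (gr_mul x y) z;
  gr_mulDl : forall x y z, gr_mul (x + y) z = gr_mul x z + gr_mul y z;
  gr_mulDr : forall x y z, gr_mul x (y + z) = gr_mul x y + gr_mul x z
}.

Section GenRingDefs.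
Variable I : genRing.
Local Notation "x ** y" := (gr_mul x y) (at level 40, left associativity).

(* gpow a n = a^(n+1)  (positive powers only: there is no identity) *)
Definition gpow (a : I) (n : nat) : I := iter n (fun y => a ** y) a.

Definition gnilpotent (a : I) : Prop := exists n, gpow a n = 0.

Definition gcirc (p q : I) : I := p + q - p ** q.

Definition inQ (q : I) : Prop := exists p : I, gcirc p q = 0 /\ gcirc q p = 0.

Definition incomm (a x : I) : Prop := x ** a = a ** x.

Definition incomm2 (a x : I) : Prop := forall y, incomm a y -> x ** y = y ** x.

Definition inQN (q : I) : Prop := forall x, incomm q x -> inQ (q ** x).

Definition quasipolar_elt (a : I) : Prop :=
  exists p : I, p ** p = p /\ incomm2 a p /\ inQ (a + p) /\ inQN (a - a ** p).

Definition quasipolar_ring : Prop := forall a : I, quasipolar_elt a.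

(* a strongly pi-regular: exist n >= 1 and x with xa = ax and a^n = a^(n+1) x.
   Here gpow a n = a^(n+1), so n ranges over naturals >= 1 via the shift. *)
Definition spr_elt (a : I) : Prop :=
  exists (n : nat) (x : I), x ** a = a ** x /\ gpow a n = gpow a n.+1 ** x.

Definition spr_ring : Prop := forall a : I, spr_elt a.

End GenRingDefs.

(* Main.v *)
Require Import Defs.
From mathcomp Require Import all_boot all_order all_algebra.
Set Implicit Arguments. Unset Strict Implicit. Unset Printing Implicit Defensive.
Import GRing.Theory.
Section L.
Local Open Scope ring_scope.
Variable I : genRing.
Local Notation "x ** y" := (gr_mul x y) (at level 40, left associativity).
Implicit Types a b c x y z e t u s q p w g : I.

Lemma mul0g x : (0 : I) ** x = 0.
Proof. apply: (@addrI _ (0 ** x)); by rewrite -gr_mulDl !addr0. Qed.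
Lemma mulg0 x : x ** (0 : I) = 0.
Proof. apply: (@addrI _ (x ** 0)); by rewrite -gr_mulDr !addr0. Qed.
Lemma mulNg x y : (- x) ** y = - (x ** y).
Proof. apply: (@addrI _ (x ** y)); by rewrite -gr_mulDl !subrr mul0g. Qed.
Lemma mulgN x y : x ** (- y) = - (x ** y).
Proof. apply: (@addrI _ (x ** y)); by rewrite -gr_mulDr !subrr mulg0. Qed.
Lemma mulBg x y z : (x - y) ** z = x ** z - y ** z.
Proof. by rewrite gr_mulDl mulNg. Qed.
Lemma mulgB x y z : z ** (x - y) = z ** x - z ** y.
Proof. by rewrite gr_mulDr mulgN. Qed.

Lemma circA x y z : gcirc (gcirc x y) z = gcirc x (gcirc y z).
Proof.
rewrite /gcirc !(mulBg, mulgB, gr_mulDl, gr_mulDr) !gr_mulA.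
rewrite !opprD !opprK !addrA.
set A := x ** y. set B := y ** z. set C := x ** z. set D := A ** z.
move: A B C D => A B C D.
by rewrite [LHS](ACl (1*2*4*6*3*5*7))%AC. Qed.

Lemma circ0l x : gcirc 0 x = x.
Proof. by rewrite /gcirc mul0g add0r subr0. Qed.

Lemma inQ_circ s1 s2 : inQ s1 -> inQ s2 -> inQ (gcirc s1 s2).
Proof.
move=> [r1 [h1 h1']] [r2 [h2 h2']]; exists (gcirc r2 r1); split.
  by rewrite circA -(circA r1 s1 s2) h1 circ0l h2.
by rewrite circA -(circA s2 r2 r1) h2' circ0l h1'.
Qed.

Lemma gpowS a n : gpow a n.+1 = a ** gpow a n.
Proof. by []. Qed.

Lemma gpow_comm a y n : y ** a = a ** y -> y ** gpow a n = gpow a n ** y.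
Proof.
move=> h; elim: n => [|n IH] //=.
by rewrite gr_mulA h -gr_mulA IH gr_mulA.
Qed.

Lemma gpow_mul a x n : x ** a = a ** x -> gpow (a ** x) n = gpow a n ** gpow x n.
Proof.
move=> h; elim: n => [|n IH] //.
rewrite gpowS IH gpowS gpowS -gr_mulA (gr_mulA x) (gpow_comm _ h) -gr_mulA.
by rewrite gr_mulA.
Qed.

Lemma gpow_fix u t n : u ** t = u -> u ** gpow t n = u.
Proof. by move=> h; elim: n => [|n IH] //; rewrite gpowS gr_mulA h. Qed.

Fixpoint geo t k := if k is k'.+1 then t + t ** geo t k' else 0.

Lemma geo_comm t k : geo t k ** t = t ** geo t k.
Proof.
elim: k => [|k IH] /=; first by rewrite mul0g mulg0.
by rewrite gr_mulDl gr_mulDr -gr_mulA IH.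
Qed.

Lemma geo_diff t k : geo t k.+1 - geo t k = gpow t k.
Proof.
elim: k => [|k IH]; first by rewrite /= mulg0 addr0 subr0.
have e1 : geo t k.+2 = t + t ** geo t k.+1 by [].
have e2 : geo t k.+1 = t + t ** geo t k by [].
by rewrite gpowS -IH mulgB e1 {2}e2 opprD addrACA subrr add0r.
Qed.

Lemma nil_Q t m : gpow t m = 0 -> inQ t.
Proof.
move=> h; have h1 : geo t m.+1 = geo t m by apply/eqP; rewrite -subr_eq0 geo_diff h.
have h2 : t ** geo t m = geo t m - t by rewrite -[in RHS]h1 /= addrAC subrr add0r.
exists (- geo t m); rewrite /gcirc mulNg mulgN opprK geo_comm h2; split.
  by rewrite (addrC (- _) t) -(opprB t (geo t m)) subrr.
by rewrite -(opprB t (geo t m)) opprK subrr.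
Qed.

Lemma comm_quasi z q s : z ** s = s ** z -> gcirc q s = 0 -> gcirc s q = 0 ->
  z ** q = q ** z.
Proof.
move=> hzs hA hB.
have E1 : q ** s = q + s by rewrite (subr0_eq hA).
have E2 : s ** q = s + q by rewrite (subr0_eq hB).
have F : q ** (z ** s) = q ** z + s ** z by rewrite hzs gr_mulA E1 gr_mulDl.
have G1 : s ** z ** q = q ** z + s ** z.
  have X1 : q ** z ** s ** q = q ** z ** q + s ** z ** q.
    by rewrite -(gr_mulA q z s) F gr_mulDl.
  have X2 : q ** z ** s ** q = q ** z + s ** z + q ** z ** q.
    by rewrite -gr_mulA E2 gr_mulDr -(gr_mulA q z s) F.
  by apply: (@addrI _ (q ** z ** q)); rewrite -X1 X2 addrC.
have H : s ** z ** q = s ** z + z ** q by rewrite -hzs -gr_mulA E2 gr_mulDr hzs.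
by apply: (@addrI _ (s ** z)); rewrite -H G1 addrC.
Qed.

Lemma gpow_sub_idem a e k : e ** e = e -> e ** a = a ** e ->
  gpow (a - a ** e) k = gpow a k - gpow a k ** e.
Proof.
move=> hee hea; elim: k => [|k IH] //.
rewrite gpowS IH gpowS mulBg !mulgB.
have he : e ** gpow a k = gpow a k ** e by apply: gpow_comm.
rewrite -!(gr_mulA a e) he (gr_mulA e) he -(gr_mulA _ e e) hee subrr subr0 gr_mulA.
by [].
Qed.

Lemma spr_nil q : spr_elt q -> inQN q -> gnilpotent q.
Proof.
move=> [n [x [hx hg]]] hQN.
have [r [_ h2]] := hQN x hx.
set g := gpow q n in hg.
have hgt : g ** (q ** x) = g.
  by rewrite gr_mulA -(gpow_comm n (erefl (q ** q))) -gpowS -hg.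
exists n; rewrite -/g.
have : g ** gcirc (q ** x) r = 0 by rewrite h2 mulg0.
rewrite /gcirc mulgB gr_mulDr (gr_mulA g (q ** x) r) hgt.
by rewrite addrK.
Qed.

Lemma qp_spr a : quasipolar_elt a -> (forall q, inQN q -> gnilpotent q) -> spr_elt a.
Proof.
move=> [p [hpp [hc2 [[q [hA hB]] hQN]]]] hnil.
have pa : p ** a = a ** p by apply: hc2.
have as_ : a ** (a + p) = (a + p) ** a by rewrite gr_mulDl gr_mulDr pa.
have ps_ : p ** (a + p) = (a + p) ** p by rewrite gr_mulDl gr_mulDr pa.
have qa : a ** q = q ** a := comm_quasi as_ hA hB.
have qp : p ** q = q ** p := comm_quasi ps_ hA hB.
have key : a ** (q ** p) = a ** p + p.
  have : gcirc (a + p) q ** p = 0 by rewrite hB mul0g.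
  rewrite /gcirc mulBg gr_mulDl -gr_mulA gr_mulDl hpp.
  rewrite (gr_mulDl a p (q ** p)) (gr_mulA p q p) qp -(gr_mulA q p p) hpp.
  by move/eqP; rewrite subr_eq0 => /eqP /addIr ->.
have ax : a ** (q ** p - p) = p by rewrite mulgB key addrAC subrr add0r.
have [m hm] := hnil _ hQN.
exists m, (q ** p - p); split.
  by rewrite ax mulBg -gr_mulA pa gr_mulA -qa -gr_mulA key addrAC subrr add0r.
rewrite gpowS (gpow_comm m (erefl (a ** a))) -gr_mulA ax.
move: hm; rewrite gpow_sub_idem // => /eqP; rewrite subr_eq0 => /eqP.
by [].
Qed.

Lemma spr_qp a : spr_elt a -> quasipolar_elt a.
Proof.
move=> [n [x [hx hu]]].
rewrite gpowS in hu.
set u := gpow a n in hu *.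
set w := gpow x n.
have au : a ** u = u ** a := gpow_comm n (erefl _).
have xu : x ** u = u ** x := gpow_comm n hx.
have aw : a ** w = w ** a := gpow_comm n (esym hx).
have wu : w ** u = u ** w := gpow_comm n (esym aw).
have uax : u ** (a ** x) = u by rewrite gr_mulA -au -hu.
have ue : u ** (u ** w) = u by rewrite -(gpow_mul n hx) gpow_fix.
have eu : (u ** w) ** u = u by rewrite -gr_mulA wu ue.
have hee : (u ** w) ** (u ** w) = u ** w by rewrite gr_mulA eu.
have hc2 : incomm2 a (u ** w).
  move=> y hy.
  have yu : y ** u = u ** y := gpow_comm n hy.
  have L1 : y ** (u ** w) = u ** (y ** w) by rewrite gr_mulA yu -gr_mulA.
  have h1 : (u ** w) ** (y ** (u ** w)) = y ** (u ** w) by rewrite L1 gr_mulA eu.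
  have L2 : (u ** w) ** y = w ** (y ** u) by rewrite -wu -gr_mulA yu.
  have h2 : (u ** w) ** y ** (u ** w) = (u ** w) ** y.
    by rewrite L2 -gr_mulA -(gr_mulA y u) ue.
  by rewrite -h2 -gr_mulA h1.
have hea : (u ** w) ** a = a ** (u ** w) := hc2 a (erefl _).
have xe : (u ** w) ** x = x ** (u ** w) := hc2 x hx.
have axe : a ** x ** (u ** w) = u ** w.
  by rewrite gr_mulA -(gr_mulA a x u) xu gr_mulA -hu.
exists (u ** w).
set e := u ** w in ue eu hee hc2 hea xe axe *.
have P1 : e ** (a ** e) = a ** e by rewrite gr_mulA hea -gr_mulA hee.
split; first exact: hee.
split; first exact: hc2.
split.
  have z : (a ** e + e) ** (a - a ** e) = 0.
    by rewrite mulgB !gr_mulDl -!(gr_mulA a e) hea P1 subrr.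
  have hs : a + e = gcirc (a ** e + e) (a - a ** e).
    by rewrite /gcirc z subr0 [RHS]addrC addrA subrK.
  rewrite hs; apply: inQ_circ.
    exists (e + x ** e); rewrite /gcirc; split.
      rewrite gr_mulDl !gr_mulDr P1 hee -(gr_mulA x e) P1 (gr_mulA x a e) hx axe.
      by rewrite -(gr_mulA x e e) hee (addrC (e + x ** e)) subrr.
    rewrite gr_mulDl !gr_mulDr -(gr_mulA a e e) hee -(gr_mulA a e (x ** e)).
    rewrite (gr_mulA e x e) xe -(gr_mulA x e e) hee (gr_mulA a x e) axe.
    by rewrite subrr.
  apply: (@nil_Q _ n); rewrite gpow_sub_idem // ue subrr.
  by [].
move=> y hy; apply: (@nil_Q _ n).
by rewrite gpow_mul // gpow_sub_idem // ue subrr mul0g.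
Qed.
End L.

Theorem proposition2p21 (I : genRing) :
  spr_ring I <-> (quasipolar_ring I /\ (forall q : I, inQN q -> gnilpotent q)).
Proof.
split.
  move=> h; split; first by move=> a; apply: spr_qp.
  by move=> q; apply: spr_nil.
by move=> [h1 h2] a; apply: qp_spr.
Qed.
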